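(* Let $M\in\mathbb N$, $M\ge1$, and $x_0,x_1\in\{x:|x-1|\le p^{-M}\}$. If $\lambda_0,\lambda_1\in\Lambda$ satisfy $|\lambda_0-\lambda_1|=|x_0-x_1|$, then $$|Q^M_{\lambda_0}(x_0)-Q^M_{\lambda_1}(x_1)|=p^M|\lambda_0-\lambda_1|.$$
   Context: Let $p$ be a prime, $\mathbb C_p$ with $p$-adic absolute value, $|p|=1/p$. $\Lambda=\{\lambda\in\mathbb C_p:|\lambda-1|<1\}$, $P_\lambda(z)=\frac{\lambda}{p}z^p+\left(1-\frac{\lambda}{p}\right)z^{p+1}$, $\rho=p^{-1/(p-1)}$. Fix $\hat r\in|\mathbb C_p^*|$, $\hat r>1$, $B=\{z:|z|\le\hat r\}$; $\mathcal H(B)$ is the ring of power series $\sum a_iz^i$ convergent on $B$ with norm $\|f\|_B=\sup_i|a_i|\hat r^{\,i}$. Fix $Q\in\mathcal H(B)$ with $\|Q\|_B<\rho$, $Q^*_\lambda=P_\lambda+Q$, and let $h(\lambda)$ be the unique fixed point of $Q^*_\lambda$ in $\{z:|z-1|\le|Q(1)|/p\}$. Define $Q_\lambda(z)=P_\lambda(z+h(\lambda)-1)+Q(z+h(\lambda)-1)+1-h(\lambda)$ for $z\in B$; $Q_\lambda^n$ denotes the $n$-th iterate. *)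

(* Defs.v *)
From HB Require Import structures.
From mathcomp Require Import all_boot all_order all_algebra.
From mathcomp Require Import all_classical all_reals all_analysis.
Set Implicit Arguments. Unset Strict Implicit. Unset Printing Implicit Defensive.
Import Order.TTheory GRing.Theory Num.Theory numFieldNormedType.Exports.
Local Open Scope classical_set_scope.
Local Open Scope ring_scope.

Section Defs.
Variables (R : realType) (K : closedFieldType).

Definition abs_cvg (abs : K -> R) (u : nat -> K) (l : K) : Prop :=
  forall e : R, 0 < e -> exists N : nat, forall n, (N <= n)%N -> abs (u n - l) < e.

Definition abs_cauchy (abs : K -> R) (u : nat -> K) : Prop :=
  forall e : R, 0 < e -> exists N : nat,
    forall m n, (N <= m)%N -> (N <= n)%N -> abs (u m - u n) < e.

(* (K, abs) is a model of C_p: an algebraically closed field (K is a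
   closedFieldType) complete for a non-archimedean absolute value with
   |p| = 1/p. *)
Record Cp_abs (p : nat) (abs : K -> R) : Prop := {
  abs_ge0 : forall x, 0 <= abs x;
  abs_eq0 : forall x, abs x = 0 <-> x = 0;
  absM : forall x y, abs (x * y) = abs x * abs y;
  abs_ultra : forall x y, abs (x + y) <= Num.max (abs x) (abs y);
  abs_p : abs (p%:R) = (p%:R)^-1;
  abs_complete : forall u, abs_cauchy abs u -> exists l, abs_cvg abs u l
}.

Definition rho (p : nat) : R := (p%:R : R) `^ (- ((p%:R : R) - 1)^-1).

Definition psum (a : nat -> K) (z : K) (n : nat) : K := \sum_(i < n) a i * z ^+ i.

Definition ps_eval (abs : K -> R) (a : nat -> K) (z : K) : K :=
  xget 0 [set l | abs_cvg abs (psum a z) l].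

(* a is in H(B), B = {|z| <= rhat}: |a_i| rhat^i -> 0 *)
Definition in_HB (abs : K -> R) (rhat : R) (a : nat -> K) : Prop :=
  (fun i : nat => abs (a i) * rhat ^+ i) @ \oo --> (0 : R).

Definition ps_norm (abs : K -> R) (rhat : R) (a : nat -> K) : R :=
  sup (range (fun i : nat => abs (a i) * rhat ^+ i)).

Definition Plam (p : nat) (lam z : K) : K :=
  lam / p%:R * z ^+ p + (1 - lam / p%:R) * z ^+ p.+1.

Definition Qstar (abs : K -> R) (p : nat) (a : nat -> K) (lam z : K) : K :=
  Plam p lam z + ps_eval abs a z.

Definition hfix (abs : K -> R) (p : nat) (a : nat -> K) (lam : K) : K :=
  xget 0 [set z | abs (z - 1) <= abs (ps_eval abs a 1) / p%:R
                  /\ Qstar abs p a lam z = z].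

Definition Qlam (abs : K -> R) (p : nat) (a : nat -> K) (lam z : K) : K :=
  let h := hfix abs p a lam in
  Plam p lam (z + h - 1) + ps_eval abs a (z + h - 1) + 1 - h.

End Defs.

(* Main.v *)
Require Import Defs.
From HB Require Import structures.
From mathcomp Require Import all_boot all_order all_algebra.
From mathcomp Require Import all_classical all_reals all_analysis.
From mathcomp Require Import ring lra zify.
Import Order.TTheory GRing.Theory Num.Theory numFieldNormedType.Exports.
Local Open Scope classical_set_scope.
Local Open Scope ring_scope.
Set Implicit Arguments. Unset Strict Implicit.

Section Base.
Variables (R : realType) (K : closedFieldType) (p : nat) (abs : K -> R).
Hypothesis Hp : prime p.
Hypothesis H : Cp_abs p abs.

Lemma a_ge0 x : 0 <= abs x. Proof. exact: abs_ge0 H x. Qed.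
Lemma a0 : abs 0 = 0. Proof. by apply/(abs_eq0 H). Qed.
Lemma a_eq0 x : (abs x == 0) = (x == 0).
Proof. apply/eqP/eqP; first by move/(abs_eq0 H). by move=> ->; exact: a0. Qed.
Lemma a_gt0 x : x != 0 -> 0 < abs x.
Proof. by move=> nz; rewrite lt0r a_eq0 nz a_ge0. Qed.
Lemma aM x y : abs (x * y) = abs x * abs y. Proof. exact: absM H x y. Qed.
Lemma a1 : abs 1 = 1.
Proof.
have h := aM 1 1. rewrite mulr1 in h.
have nz : abs 1 != 0 by rewrite a_eq0 oner_eq0.
by apply: (mulfI nz); rewrite -h mulr1.
Qed.
Lemma aN1 : abs (-1) = 1.
Proof.
have h := aM (-1) (-1). rewrite mulrNN mulr1 a1 in h.
have : (abs (-1) - 1) * (abs (-1) + 1) = 0 by rewrite mulrBl !mulrDr -h; ring.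
move/eqP; rewrite mulf_eq0 => /orP [/eqP|]; first by move/eqP; rewrite subr_eq0 => /eqP.
move=> h2; have : 0 < abs (-1) + 1 by apply: ltr_wpDl (a_ge0 _) ltr01.
by rewrite lt0r h2.
Qed.
Lemma aN x : abs (- x) = abs x.
Proof. by rewrite -mulN1r aM aN1 mul1r. Qed.
Lemma aB x y : abs (x - y) = abs (y - x).
Proof. by rewrite -aN opprB. Qed.
Lemma aX x n : abs (x ^+ n) = abs x ^+ n.
Proof. elim: n => [|n IH]; first by rewrite !expr0 a1. by rewrite !exprS aM IH. Qed.
Lemma aV x : abs (x^-1) = (abs x)^-1.
Proof.
have [->|nz] := eqVneq x 0; first by rewrite invr0 a0 invr0.
have := aM x x^-1; rewrite mulfV // a1 => h.
have nz' : abs x != 0 by rewrite a_eq0.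
by apply: (mulfI nz'); rewrite -h mulfV.
Qed.

Lemma ultra x y c : abs x <= c -> abs y <= c -> abs (x + y) <= c.
Proof. move=> hx hy; apply: le_trans (abs_ultra H x y) _; by rewrite ge_max hx hy. Qed.
Lemma ultraB x y c : abs x <= c -> abs y <= c -> abs (x - y) <= c.
Proof. by move=> hx hy; apply: ultra => //; rewrite aN. Qed.
Lemma ultra_lt x y c : abs x < c -> abs y < c -> abs (x + y) < c.
Proof. move=> hx hy; apply: le_lt_trans (abs_ultra H x y) _; by rewrite gt_max hx hy. Qed.
Lemma ultra_eq x y : abs y < abs x -> abs (x + y) = abs x.
Proof.
move=> hyx; apply/eqP; rewrite eq_le; apply/andP; split.
  by apply: ultra => //; exact: ltW.
have e : x = (x + y) + (- y) by rewrite addrK.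
have := abs_ultra H (x + y) (- y); rewrite -e aN.
rewrite le_max => /orP [h|h] //. by move: (lt_le_trans hyx h); rewrite ltxx.
Qed.

Lemma pgt1 : (1 < p)%N. Proof. exact: prime_gt1. Qed.
Lemma pR_gt1 : 1 < (p%:R : R). Proof. by rewrite ltr1n pgt1. Qed.
Lemma pR_gt0 : 0 < (p%:R : R). Proof. exact: lt_trans ltr01 pR_gt1. Qed.
Lemma ap : abs (p%:R) = (p%:R : R)^-1. Proof. exact: abs_p H. Qed.
Lemma pK_neq0 : (p%:R : K) != 0.
Proof. apply/negP => /eqP e; have := ap; rewrite e a0 => /eqP; rewrite eq_sym invr_eq0.
by rewrite gt_eqF // pR_gt0. Qed.
Lemma apV : abs ((p%:R : K)^-1) = p%:R.
Proof. by rewrite aV ap invrK. Qed.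

Lemma anat n : abs (n%:R) <= 1.
Proof. elim: n => [|n IH]; first by rewrite a0 ler01. by rewrite -addn1 natrD; apply: ultra => //; rewrite a1. Qed.

Lemma powdiff z w n : abs z <= 1 -> abs w <= 1 -> abs (z ^+ n - w ^+ n) <= abs (z - w).
Proof.
move=> hz hw; elim: n => [|n IH]; first by rewrite !expr0 subrr a0 a_ge0.
have e : z ^+ n.+1 - w ^+ n.+1 = z * (z ^+ n - w ^+ n) + w ^+ n * (z - w).
  by rewrite !exprS; ring.
rewrite e; apply: ultra.
  rewrite aM; apply: le_trans IH; rewrite -[X in _ <= X]mul1r; apply: ler_wpM2r => //; exact: a_ge0.
rewrite aM aX -[X in _ <= X]mul1r; apply: ler_wpM2r; first exact: a_ge0.
by apply: exprn_ile1 => //; exact: a_ge0.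
Qed.

Lemma unit_of x : abs (x - 1) < 1 -> abs x = 1.
Proof. move=> h; have e : x = 1 + (x - 1) by rewrite addrC subrK. by rewrite e ultra_eq a1. Qed.
Lemma unit_le x : abs (x - 1) <= 1 -> abs x <= 1.
Proof. move=> h; have e : x = (x - 1) + 1 by rewrite subrK. by rewrite e; apply: ultra; rewrite ?a1. Qed.

End Base.


Section Step.
Variables (R : realType) (K : closedFieldType) (p : nat) (abs : K -> R).
Hypothesis Hp : prime p.
Hypothesis H : Cp_abs p abs.

Definition gg (z : K) := z ^+ p * (1 - z).

Lemma ipos : 0 < (p%:R : R)^-1. Proof. by rewrite invr_gt0 (pR_gt0 R Hp). Qed.
Lemma ilt1 : (p%:R : R)^-1 < 1. Proof. by rewrite invf_lt1 ?(pR_gt0 R Hp) ?(pR_gt1 R Hp). Qed.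

Lemma gg_small z : abs (z - 1) <= (p%:R)^-1 -> abs (gg z) <= (p%:R)^-1.
Proof.
move=> hz; have uz : abs z = 1 by apply: (unit_of H); apply: le_lt_trans hz ilt1.
by rewrite /gg (aM H) (aX H) uz expr1n mul1r (aB H).
Qed.

Lemma gg_diff z w : abs (z - 1) <= (p%:R)^-1 -> abs (w - 1) <= (p%:R)^-1 ->
  abs (gg z - gg w + (z - w)) <= (p%:R)^-1 * abs (z - w).
Proof.
move=> hz hw.
have uz : abs z <= 1 by apply: (unit_le H); apply: le_trans hz (ltW ilt1).
have uw : abs w <= 1 by apply: (unit_le H); apply: le_trans hw (ltW ilt1).
have e : gg z - gg w + (z - w) =
  - ((z - w) * (z ^+ p - 1 ^+ p) + (w - 1) * (z ^+ p - w ^+ p)).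
  rewrite /gg expr1n; ring.
rewrite e (aN H); apply: (ultra H).
  rewrite (aM H) mulrC; apply: ler_wpM2r; first exact: (a_ge0 H).
  apply: le_trans hz; apply: (powdiff H) => //; by rewrite (a1 H).
rewrite (aM H); apply: ler_pM => //; try exact: (a_ge0 H).
exact: (powdiff H).
Qed.

Lemma Plam_eq l z : Plam p l z = z ^+ p.+1 + (p%:R)^-1 * (l * gg z).
Proof. rewrite /Plam /gg exprS; ring. Qed.

Lemma Pstep l0 l1 z w :
  abs (z - 1) <= (p%:R)^-1 -> abs (w - 1) <= (p%:R)^-1 ->
  abs (l0 - 1) < 1 -> abs (l1 - 1) < 1 -> abs (l0 - l1) <= abs (z - w) ->
  abs (Plam p l0 z - Plam p l1 w) = p%:R * abs (z - w).
Proof.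
move=> hz hw hl0 hl1 hl.
have [ezw|nzw] := eqVneq z w.
  move: hl; rewrite ezw subrr (a0 H) => hl.
  have : abs (l0 - l1) == 0 by rewrite eq_le hl (a_ge0 H).
  by rewrite (a_eq0 H) subr_eq0 => /eqP ->; rewrite subrr (a0 H) mulr0.
set d := abs (z - w).
have dpos : 0 < d by apply: (a_gt0 H); rewrite subr_eq0.
have uz : abs z <= 1 by apply: (unit_le H); apply: le_trans hz (ltW ilt1).
have uw : abs w <= 1 by apply: (unit_le H); apply: le_trans hw (ltW ilt1).
have ul1 : abs l1 = 1 by apply: (unit_of H).
set B := l0 * gg z - l1 * gg w.
have eB : B = l1 * (- (z - w) + (gg z - gg w + (z - w))) + (l0 - l1) * gg z.
  rewrite /B; ring.
have hE : abs (gg z - gg w + (z - w)) < d.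
  apply: le_lt_trans (gg_diff hz hw) _; by rewrite gtr_pMl // ilt1.
have h1 : abs (l1 * (- (z - w) + (gg z - gg w + (z - w)))) = d.
  by rewrite (aM H) ul1 mul1r (ultra_eq H) (aN H).
have h2 : abs ((l0 - l1) * gg z) < d.
  rewrite (aM H); apply: le_lt_trans (_ : _ <= d * (p%:R)^-1) _.
    apply: ler_pM => //; try exact: (a_ge0 H). exact: gg_small.
  by rewrite gtr_pMr // ilt1.
have hB : abs B = d by rewrite eB (ultra_eq H) h1.
have e : Plam p l0 z - Plam p l1 w = (p%:R)^-1 * B + (z ^+ p.+1 - w ^+ p.+1).
  rewrite !Plam_eq /B; ring.
rewrite e (ultra_eq H) (aM H) (apV H) hB //.
apply: le_lt_trans (powdiff H _ uz uw) _.
by rewrite ltr_pMl // (pR_gt1 R Hp).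
Qed.

End Step.


Section PS.
Variables (R : realType) (K : closedFieldType) (p : nat) (abs : K -> R).
Hypothesis H : Cp_abs p abs.
Variable a : nat -> K.
Hypothesis Ha1 : forall i, abs (a i) <= 1.
Hypothesis Hcv : forall e, 0 < e -> exists N, forall n, (N <= n)%N -> abs (a n) < e.

Lemma sum_bound (f : nat -> K) n c : 0 <= c -> (forall i, (i < n)%N -> abs (f i) <= c) ->
  abs (\sum_(i < n) f i) <= c.
Proof.
move=> c0; elim: n => [|n IH] hf; first by rewrite big_ord0 (a0 H).
rewrite big_ord_recr /=; apply: (ultra H); last exact: hf.
by apply: IH => i hi; apply: hf; apply: ltnW.
Qed.

Lemma sum_bound_lt (f : nat -> K) n c : 0 < c -> (forall i, (i < n)%N -> abs (f i) < c) ->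
  abs (\sum_(i < n) f i) < c.
Proof.
move=> c0; elim: n => [|n IH] hf; first by rewrite big_ord0 (a0 H).
rewrite big_ord_recr /=; apply: (ultra_lt H); last exact: hf.
by apply: IH => i hi; apply: hf; apply: ltnW.
Qed.

Lemma psum_tail z e : abs z <= 1 -> 0 < e -> exists N, forall n k, (N <= n)%N ->
  abs (psum a z (n + k) - psum a z n) < e.
Proof.
move=> hz he; have [N hN] := Hcv he; exists N => n k hn.
have -> : psum a z (n + k) - psum a z n = \sum_(i < k) (a (n + i)%N * z ^+ (n + i)).
  by rewrite /psum big_split_ord /= addrAC subrr add0r.
apply: (sum_bound_lt (f := fun i => a (n + i)%N * z ^+ (n + i)) (c:=e)) => // i _; rewrite (aM H) (aX H).
apply: le_lt_trans (hN (n + i)%N _); last by apply: leq_trans hn (leq_addr _ _).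
rewrite -[X in _ <= X]mulr1; apply: ler_wpM2l; first exact: (a_ge0 H).
by apply: exprn_ile1 => //; exact: (a_ge0 H).
Qed.

Lemma psum_cauchy z : abs z <= 1 -> abs_cauchy abs (psum a z).
Proof.
move=> hz e he; have [N hN] := psum_tail hz he; exists N => m n hm hn.
have [hmn|hmn] := leqP n m.
  by rewrite -(subnKC hmn); apply: hN.
rewrite (aB H) -(subnKC (ltnW hmn)); exact: hN.
Qed.

Lemma ps_cvg z : abs z <= 1 -> abs_cvg abs (psum a z) (ps_eval abs a z).
Proof.
move=> hz; rewrite /ps_eval; apply: (@xgetPex _ 0 [set l | abs_cvg abs (psum a z) l]).
exact: (abs_complete H (psum_cauchy hz)).
Qed.

Lemma lim_bound u l c : abs_cvg abs u l -> (forall n, abs (u n) <= c) -> abs l <= c.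
Proof.
move=> hu hb; rewrite leNgt; apply/negP => hc.
have [N hN] := hu (abs l - c) ltac:(by rewrite subr_gt0).
have e : l = u N + - (u N - l) by rewrite opprB addrC subrK.
have : abs l < abs l.
  rewrite {1}e; apply: (ultra_lt H); first exact: le_lt_trans (hb N) hc.
  rewrite (aN H); apply: lt_le_trans (hN N (leqnn _)) _.
  by rewrite lerBlDr lerDl; apply: le_trans (a_ge0 H _) (hb N).
by rewrite ltxx.
Qed.

Lemma cvg_sub u v l m : abs_cvg abs u l -> abs_cvg abs v m ->
  abs_cvg abs (fun n => u n - v n) (l - m).
Proof.
move=> hu hv e he; have [N1 h1] := hu e he; have [N2 h2] := hv e he.
exists (maxn N1 N2) => n hn.
have e' : u n - v n - (l - m) = (u n - l) - (v n - m) by ring.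
rewrite e'; apply: (ultra_lt H); rewrite ?(aN H).
  by apply: h1; exact: leq_trans (leq_maxl _ _) hn.
by apply: h2; exact: leq_trans (leq_maxr _ _) hn.
Qed.

Lemma ps_lip z w : abs z <= 1 -> abs w <= 1 ->
  abs (ps_eval abs a z - ps_eval abs a w) <= abs (z - w).
Proof.
move=> hz hw; apply: (lim_bound (cvg_sub (ps_cvg hz) (ps_cvg hw))) => n.
rewrite /psum -sumrB.
apply: (sum_bound (f := fun i => a i * z ^+ i - a i * w ^+ i)); first exact: (a_ge0 H).
move=> i _; rewrite -mulrBr (aM H) -[X in _ <= X]mul1r.
apply: ler_pM; try exact: (a_ge0 H); first exact: Ha1.
exact: (powdiff H).
Qed.

Lemma ps_le1 z : abs z <= 1 -> abs (ps_eval abs a z) <= 1.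
Proof.
move=> hz; apply: (lim_bound (ps_cvg hz)) => n.
apply: (sum_bound (f := fun i => a i * z ^+ i)) => // i _; rewrite (aM H) (aX H) -[X in _ <= X]mul1r.
apply: ler_pM; try exact: (a_ge0 H); try exact: exprn_ge0 (a_ge0 H _); first exact: Ha1.
exact: exprn_ile1 (a_ge0 H _) hz.
Qed.

End PS.


Lemma small_pow (R : realType) (p : nat) (e : R) : (1 < p)%N -> 0 < e ->
  exists n, ((p%:R : R)^-1) ^+ n < e.
Proof.
move=> hp he; exists (Num.Def.archi_bound e^-1).
set n := Num.Def.archi_bound e^-1.
have h1 : e^-1 < n%:R by apply: archi_boundP; rewrite invr_ge0 ltW.
have h2 : (n%:R : R) < (p ^ n)%:R by rewrite ltr_nat ltn_expl.
have pn : 0 < ((p ^ n)%:R : R) by rewrite ltr0n expn_gt0 (ltn_trans _ hp).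
rewrite exprVn -natrX invf_plt ?posrE //.
exact: lt_trans h1 h2.
Qed.

Section Fix.
Variables (R : realType) (K : closedFieldType) (p : nat) (abs : K -> R).
Hypothesis Hp : prime p.
Hypothesis H : Cp_abs p abs.
Variable a : nat -> K.
Hypothesis Ha1 : forall i, abs (a i) <= 1.
Hypothesis Hcv : forall e, 0 < e -> exists N, forall n, (N <= n)%N -> abs (a n) < e.
Variable lam : K.
Hypothesis Hlam : abs (lam - 1) < 1.

Local Notation ip := ((p%:R : R)^-1).
Local Notation Q := (ps_eval abs a).
Definition cc := (p%:R : K) / lam.
Definition TT z := z + cc * (Qstar abs p a lam z - z).

Lemma lam_unit : abs lam = 1. Proof. exact: (unit_of H). Qed.
Lemma lam_neq0 : lam != 0.
Proof. by apply/negP => /eqP e; have := lam_unit; rewrite e (a0 H) => /eqP; rewrite eq_sym oner_eq0. Qed.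
Lemma acc : abs cc = ip.
Proof. by rewrite /cc (aM H) (aV H) lam_unit invr1 mulr1 (ap H). Qed.
Lemma cc_neq0 : cc != 0.
Proof. by rewrite /cc mulf_neq0 ?invr_eq0 ?lam_neq0 ?(pK_neq0 Hp H). Qed.

Lemma disc1 z : abs (z - 1) <= ip -> abs z <= 1.
Proof. move=> h; apply: (unit_le H); apply: le_trans h (ltW (ilt1 R Hp)). Qed.

Lemma TT_contr z w : abs (z - 1) <= ip -> abs (w - 1) <= ip ->
  abs (TT z - TT w) <= ip * abs (z - w).
Proof.
move=> hz hw.
have uz := disc1 hz; have uw := disc1 hw.
set k := (p%:R : K)^-1 * lam.
have ck : cc * k = 1.
  by rewrite /cc /k mulrACA mulfV ?(pK_neq0 Hp H) // mulVf ?lam_neq0 // mulr1.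
set E := gg p z - gg p w + (z - w).
have e : TT z - TT w = cc * ((z ^+ p.+1 - w ^+ p.+1) + k * E + (Q z - Q w) - (z - w))
   + (1 - cc * k) * (z - w).
  rewrite /TT /Qstar !(Plam_eq) /E /k; ring.
rewrite e ck subrr mul0r addr0 (aM H) acc; apply: ler_wpM2l; first exact: ltW (ipos R Hp).
apply: (ultraB H); last by [].
apply: (ultra H); last exact: (ps_lip H Ha1 Hcv).
apply: (ultra H); first exact: (powdiff H).
rewrite /k (aM H) (aM H) (apV H) lam_unit mulr1.
have := gg_diff Hp H hz hw; rewrite -/E => hE.
apply: le_trans (ler_wpM2l (ltW (pR_gt0 R Hp)) hE) _.
by rewrite mulrA mulfV ?mul1r // lt0r_neq0 // pR_gt0.
Qed.

Definition rr := abs (Q 1) / p%:R.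

Lemma rr_le : rr <= ip.
Proof.
rewrite /rr -[X in _ <= X]mul1r; apply: ler_wpM2r; first exact: ltW (ipos R Hp).
apply: (ps_le1 H Ha1 Hcv); by rewrite (a1 H).
Qed.

Lemma TT1 : abs (TT 1 - 1) = rr.
Proof.
have e : TT 1 - 1 = cc * Q 1.
  rewrite /TT /Qstar /Plam !expr1n; ring.
by rewrite e (aM H) acc mulrC.
Qed.

Lemma TT_disc z : abs (z - 1) <= rr -> abs (TT z - 1) <= rr.
Proof.
move=> hz; have hz' : abs (z - 1) <= ip := le_trans hz rr_le.
have e : TT z - 1 = (TT z - TT 1) + (TT 1 - 1) by rewrite addrA subrK.
rewrite e; apply: (ultra H); last by rewrite TT1.
apply: le_trans (TT_contr hz' _) _; first by rewrite subrr (a0 H) ltW // ipos.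
apply: le_trans hz; rewrite -[X in _ <= X]mul1r; apply: ler_wpM2r; first exact: (a_ge0 H).
exact: ltW (ilt1 R Hp).
Qed.

Definition zs n := iter n TT 1.

Lemma zs_disc n : abs (zs n - 1) <= rr.
Proof.
elim: n => [|n IH]; first by rewrite /zs /= subrr (a0 H) /rr mulr_ge0 ?(a_ge0 H) // ltW // ipos.
by rewrite /zs iterS; apply: TT_disc.
Qed.

Lemma zs_ip n : abs (zs n - 1) <= ip. Proof. exact: le_trans (zs_disc n) rr_le. Qed.

Lemma zs_step n : abs (zs n.+1 - zs n) <= ip ^+ n * rr.
Proof.
elim: n => [|n IH]; first by rewrite expr0 mul1r /zs /= TT1.
have e1 : zs n.+2 = TT (zs n.+1) by [].
have e2 : zs n.+1 = TT (zs n) by [].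
rewrite e1 {2}e2; apply: le_trans (TT_contr (zs_ip _) (zs_ip _)) _.
rewrite exprS -mulrA; apply: ler_wpM2l; first exact: ltW (ipos R Hp).
exact: IH.
Qed.

Lemma zs_tail n k : abs (zs (n + k) - zs n) <= ip ^+ n * rr.
Proof.
have hnn : 0 <= ip ^+ n * rr.
  by rewrite mulr_ge0 ?exprn_ge0 // ?(ltW (ipos R Hp)) // /rr mulr_ge0 ?(a_ge0 H) // ltW // ipos.
elim: k => [|k IH]; first by rewrite addn0 subrr (a0 H).
have e : zs (n + k.+1) - zs n = (zs (n + k).+1 - zs (n + k)) + (zs (n + k) - zs n).
  by rewrite addnS addrA subrK.
rewrite e; apply: (ultra H) => //; apply: le_trans (zs_step _) _.
apply: ler_wpM2r; first by rewrite /rr mulr_ge0 ?(a_ge0 H) // ltW // ipos.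
apply: ler_wiXn2l; [exact: ltW (ipos R Hp)|exact: ltW (ilt1 R Hp)|exact: leq_addr].
Qed.

Lemma zs_cauchy : abs_cauchy abs zs.
Proof.
move=> e he; have [N hN] := small_pow (prime_gt1 Hp) he; exists N => m n hm hn.
have key : forall m n, (N <= n)%N -> (n <= m)%N -> abs (zs m - zs n) < e.
  move=> m' n' hn' hnm; rewrite -(subnKC hnm); apply: le_lt_trans (zs_tail _ _) _.
  apply: le_lt_trans (_ : _ <= ip ^+ n') _.
    rewrite -[X in _ <= X]mulr1; apply: ler_wpM2l; first by rewrite exprn_ge0 // ltW // ipos.
    exact: le_trans rr_le (ltW (ilt1 R Hp)).
  apply: le_lt_trans hN; apply: ler_wiXn2l; [exact: ltW (ipos R Hp)|exact: ltW (ilt1 R Hp)|exact: hn'].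
have [hmn|hmn] := leqP n m; first exact: key.
rewrite (aB H); apply: key => //; exact: ltnW.
Qed.

Lemma fix_exists : exists z, abs (z - 1) <= rr /\ Qstar abs p a lam z = z.
Proof.
have [l hl] := abs_complete H zs_cauchy.
have hl1 : abs (l - 1) <= rr.
  apply: (lim_bound H (u := fun n => zs n - 1)); last exact: zs_disc.
  move=> e he; have [N hN] := hl e he; exists N => n hn.
  have -> : zs n - 1 - (l - 1) = zs n - l by ring.
  exact: hN.
have hl' : abs (l - 1) <= ip := le_trans hl1 rr_le.
exists l; split => //.
have : abs (TT l - l) == 0.
  rewrite eq_le (a_ge0 H) andbT; apply/ler_addgt0Pr => e he.
  rewrite add0r; have [N hN] := hl e he.
  have e' : TT l - l = (TT l - TT (zs N)) + (zs N.+1 - l) by rewrite /zs iterS addrA subrK.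
  rewrite e'; apply: (ultra H).
    apply: le_trans (TT_contr hl' (zs_ip _)) _.
    apply: le_trans (_ : _ <= abs (l - zs N)) _.
      rewrite -[X in _ <= X]mul1r; apply: ler_wpM2r; first exact: (a_ge0 H).
      exact: ltW (ilt1 R Hp).
    by rewrite (aB H); apply: ltW; apply: hN.
  by apply: ltW; apply: hN.
rewrite (a_eq0 H) /TT addrAC subrr add0r mulf_eq0 (negbTE cc_neq0) /= subr_eq0.
by move/eqP.
Qed.

Lemma hfix_spec : abs (hfix abs p a lam - 1) <= rr /\
  Qstar abs p a lam (hfix abs p a lam) = hfix abs p a lam.
Proof.
rewrite /hfix; apply: (@xgetPex _ 0 [set z | abs (z - 1) <= abs (Q 1) / p%:R
                  /\ Qstar abs p a lam z = z]).
exact: fix_exists.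
Qed.

End Fix.


Lemma rho_le1 (R : realType) (p : nat) : (1 < p)%N -> rho R p <= 1.
Proof.
move=> hp; have p1 : (1 : R) <= p%:R by rewrite ler1n ltnW.
rewrite /rho powRN invf_le1; last by apply: powR_gt0; apply: lt_le_trans ltr01 p1.
rewrite -[X in X <= _](powRr0 (p%:R : R)); apply: ler_powR => //.
rewrite invr_ge0 subr_ge0 //.
Qed.

Lemma coef_le1 (R : realType) (K : closedFieldType) (p : nat) (abs : K -> R) rhat a :
  Cp_abs p abs -> (1 < p)%N -> 1 < rhat -> in_HB abs rhat a -> ps_norm abs rhat a < rho R p ->
  forall i, abs (a i) <= 1.
Proof.
move=> H hp hr hin hn i.
have h2 : (fun i : nat => abs (a i) * rhat ^+ i) @ \oo --> (0:R) := hin.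
have hs : has_sup (range (fun i : nat => abs (a i) * rhat ^+ i)).
  split; first by exists (abs (a 0%N) * rhat ^+ 0); exists 0%N.
  exact: bounded_fun_has_ubound (cvg_seq_bounded (cvgP _ h2)).
have hi := sup_upper_bound hs (ex_intro2 _ _ i I erefl).
apply: le_trans (_ : abs (a i) <= abs (a i) * rhat ^+ i) _.
  rewrite -[X in X <= _]mulr1; apply: ler_wpM2l; first exact: (a_ge0 H).
  by apply: exprn_ege1; apply: ltW.
apply: le_trans hi _; apply: ltW; apply: lt_le_trans hn _; exact: rho_le1.
Qed.

Lemma coef_cv (R : realType) (K : closedFieldType) (p : nat) (abs : K -> R) rhat a :
  Cp_abs p abs -> 1 < rhat -> in_HB abs rhat a ->
  forall e, 0 < e -> exists N, forall n, (N <= n)%N -> abs (a n) < e.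
Proof.
move=> H hr hin e he.
have h2 : (fun i : nat => abs (a i) * rhat ^+ i) @ \oo --> (0:R) := hin.
have [N _ hN] := cvgr_dist_lt _ _ h2 e he.
exists N => n hn; have := hN n hn; rewrite /= sub0r normrN ger0_norm; last first.
  by rewrite mulr_ge0 ?(a_ge0 H) // exprn_ge0 // ltW // (lt_trans ltr01).
apply: le_lt_trans; rewrite -[X in X <= _]mulr1; apply: ler_wpM2l; first exact: (a_ge0 H).
by apply: exprn_ege1; apply: ltW.
Qed.

Section Main.
Variables (R : realType) (K : closedFieldType) (p : nat) (abs : K -> R).
Hypothesis Hp : prime p.
Hypothesis H : Cp_abs p abs.
Variable a : nat -> K.
Hypothesis Ha1 : forall i, abs (a i) <= 1.
Hypothesis Hcv : forall e, 0 < e -> exists N, forall n, (N <= n)%N -> abs (a n) < e.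

Local Notation ip := ((p%:R : R)^-1).
Local Notation Q := (ps_eval abs a).
Local Notation hh l := (hfix abs p a l).

Lemma h_ip l : abs (l - 1) < 1 -> abs (hh l - 1) <= ip.
Proof. move=> hl; have [h1 _] := hfix_spec Hp H Ha1 Hcv hl; exact: le_trans h1 (rr_le Hp H Ha1 Hcv). Qed.
Lemma h_fix l : abs (l - 1) < 1 -> Plam p l (hh l) + Q (hh l) = hh l.
Proof. by move=> hl; have [_ h2] := hfix_spec Hp H Ha1 Hcv hl. Qed.

Lemma y_ip l x : abs (l - 1) < 1 -> abs (x - 1) <= ip -> abs (x + hh l - 1 - 1) <= ip.
Proof.
move=> hl hx; have -> : x + hh l - 1 - 1 = (x - 1) + (hh l - 1) by ring.
by apply: (ultra H) => //; apply: h_ip.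
Qed.

Lemma Qlam_one l x : abs (l - 1) < 1 -> abs (x - 1) <= ip ->
  abs (Qlam abs p a l x - 1) <= p%:R * abs (x - 1).
Proof.
move=> hl hx; set y := x + hh l - 1.
have e : Qlam abs p a l x - 1 = (Plam p l y - Plam p l (hh l)) + (Q y - Q (hh l)).
  have key : forall A B C D h0 : K, C + D = h0 -> A + B + 1 - h0 - 1 = (A - C) + (B - D).
    by move=> A B C D h0 <-; ring.
  rewrite /Qlam /=; apply: key; exact: h_fix.
have eyh : y - hh l = x - 1 by rewrite /y; ring.
rewrite e; apply: (ultra H).
  rewrite (Pstep Hp H (y_ip hl hx) (h_ip hl) hl hl) ?eyh //.
  by rewrite subrr (a0 H) (a_ge0 H).
apply: le_trans (ps_lip H Ha1 Hcv (disc1 Hp H (y_ip hl hx)) (disc1 Hp H (h_ip hl))) _.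
rewrite eyh -[X in X <= _]mul1r; apply: ler_wpM2r; first exact: (a_ge0 H).
exact: ltW (pR_gt1 R Hp).
Qed.

Lemma h_close l0 l1 : abs (l0 - 1) < 1 -> abs (l1 - 1) < 1 -> l0 != l1 ->
  abs (hh l0 - hh l1) < abs (l0 - l1).
Proof.
move=> hl0 hl1 nl; rewrite ltNge; apply/negP => hle.
have hP := Pstep Hp H (h_ip hl0) (h_ip hl1) hl0 hl1 hle.
have e : Plam p l0 (hh l0) - Plam p l1 (hh l1) = (hh l0 - hh l1) - (Q (hh l0) - Q (hh l1)).
  have key : forall A B C D h0 h1 : K, A + C = h0 -> B + D = h1 -> A - B = (h0 - h1) - (C - D).
    by move=> A B C D h0 h1 <- <-; ring.
  apply: key; exact: h_fix.
have hb : abs (Plam p l0 (hh l0) - Plam p l1 (hh l1)) <= abs (hh l0 - hh l1).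
  rewrite e; apply: (ultraB H); first exact: lexx.
  apply: (ps_lip H Ha1 Hcv); apply: (disc1 Hp H); exact: h_ip.
rewrite hP in hb.
have h0 : abs (hh l0 - hh l1) <= 0.
  have : (p%:R - 1) * abs (hh l0 - hh l1) <= 0 by rewrite mulrBl mul1r subr_le0.
  rewrite pmulr_rle0 //; by rewrite subr_gt0 (pR_gt1 R Hp).
have : abs (l0 - l1) <= 0 := le_trans hle h0.
have : 0 < abs (l0 - l1) by apply: (a_gt0 H); rewrite subr_eq0.
by move=> h1 h2; move: (lt_le_trans h1 h2); rewrite ltxx.
Qed.

Lemma Qlam_diff l0 l1 x0 x1 : abs (l0 - 1) < 1 -> abs (l1 - 1) < 1 -> l0 != l1 ->
  abs (x0 - 1) <= ip -> abs (x1 - 1) <= ip -> abs (l0 - l1) <= abs (x0 - x1) ->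
  abs (Qlam abs p a l0 x0 - Qlam abs p a l1 x1) = p%:R * abs (x0 - x1).
Proof.
move=> hl0 hl1 nl hx0 hx1 hd.
set y0 := x0 + hh l0 - 1; set y1 := x1 + hh l1 - 1.
have hc := h_close hl0 hl1 nl.
have dpos : 0 < abs (x0 - x1).
  apply: lt_le_trans hd; by apply: (a_gt0 H); rewrite subr_eq0.
have ey : abs (y0 - y1) = abs (x0 - x1).
  have -> : y0 - y1 = (x0 - x1) + (hh l0 - hh l1) by rewrite /y0 /y1; ring.
  rewrite (ultra_eq H) //; exact: lt_le_trans hc hd.
have e : Qlam abs p a l0 x0 - Qlam abs p a l1 x1 =
  (Plam p l0 y0 - Plam p l1 y1) + ((Q y0 - Q y1) - (hh l0 - hh l1)).
  rewrite /Qlam /= -/y0 -/y1; ring.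
have hP := Pstep Hp H (y_ip hl0 hx0) (y_ip hl1 hx1) hl0 hl1 ltac:(by rewrite ey).
have pd : abs (x0 - x1) < p%:R * abs (x0 - x1) by rewrite ltr_pMl // (pR_gt1 R Hp).
rewrite e (ultra_eq H) hP ey //.
apply: (ultra_lt H).
  apply: le_lt_trans pd.
  rewrite -ey; apply: (ps_lip H Ha1 Hcv); apply: (disc1 Hp H); exact: y_ip.
rewrite (aN H); apply: lt_trans pd; exact: lt_le_trans hc hd.
Qed.

End Main.

Unset Implicit Arguments.

Theorem lemma3p12 (R : realType) (K : closedFieldType) (p : nat) (abs : K -> R)
  (rhat : R) (a : nat -> K) (M : nat) (x0 x1 lam0 lam1 : K) :
  prime p -> Cp_abs p abs ->
  (exists c : K, c != 0 /\ abs c = rhat) -> 1 < rhat ->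
  in_HB abs rhat a -> ps_norm abs rhat a < rho R p ->
  (1 <= M)%N ->
  abs (x0 - 1) <= (p%:R : R) ^- M -> abs (x1 - 1) <= (p%:R : R) ^- M ->
  abs (lam0 - 1) < 1 -> abs (lam1 - 1) < 1 ->
  abs (lam0 - lam1) = abs (x0 - x1) ->
  abs (iter M (Qlam abs p a lam0) x0 - iter M (Qlam abs p a lam1) x1)
    = (p%:R : R) ^+ M * abs (lam0 - lam1).
Proof.
move=> Hp H _ hr hin hn hM hx0 hx1 hl0 hl1 hd.
have Ha1 := coef_le1 H (prime_gt1 Hp) hr hin hn.
have Hcv := coef_cv H hr hin.
have [el|nl] := eqVneq lam0 lam1.
  subst lam1; move: hd; rewrite subrr (a0 H) => /esym /eqP.
  by rewrite (a_eq0 H) subr_eq0 => /eqP ->; rewrite subrr (a0 H) mulr0.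
set X0 := fun k => iter k (Qlam abs p a lam0) x0.
set X1 := fun k => iter k (Qlam abs p a lam1) x1.
have ipos := ipos R Hp; have ilt1 := ilt1 R Hp.
have key : forall k, (k <= M)%N ->
  [/\ abs (X0 k - 1) <= ((p%:R : R)^-1) ^+ (M - k),
      abs (X1 k - 1) <= ((p%:R : R)^-1) ^+ (M - k) &
      abs (X0 k - X1 k) = (p%:R : R) ^+ k * abs (lam0 - lam1)].
  elim=> [|k IH] hk.
    by rewrite subn0 exprVn expr0 mul1r hd.
  have [h0 h1 hdd] := IH (ltnW hk).
  have eM : (M - k = (M - k.+1).+1)%N by lia.
  have hip : ((p%:R : R)^-1) ^+ (M - k) <= (p%:R : R)^-1.
    rewrite eM exprS -[X in _ <= X]mulr1; apply: ler_wpM2l; first exact: ltW.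
    by apply: exprn_ile1; apply: ltW.
  have step : forall (l : K) (x : K), abs (l - 1) < 1 ->
      abs (x - 1) <= ((p%:R : R)^-1) ^+ (M - k) ->
      abs (Qlam abs p a l x - 1) <= ((p%:R : R)^-1) ^+ (M - k.+1).
    move=> l x hl hx; apply: le_trans (Qlam_one Hp H Ha1 Hcv hl (le_trans hx hip)) _.
    apply: le_trans (ler_wpM2l (ltW (pR_gt0 R Hp)) hx) _.
    by rewrite eM exprS mulrA mulfV ?mul1r // lt0r_neq0 // pR_gt0.
  split.
  - by rewrite /X0 iterS; apply: step.
  - by rewrite /X1 iterS; apply: step.
  rewrite /X0 /X1 !iterS (Qlam_diff Hp H Ha1 Hcv hl0 hl1 nl (le_trans h0 hip) (le_trans h1 hip)).
    by rewrite -/(X0 k) -/(X1 k) hdd exprS mulrA.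
  rewrite -/(X0 k) -/(X1 k) hdd -[X in X <= _]mul1r; apply: ler_wpM2r; first exact: (a_ge0 H).
  by apply: exprn_ege1; apply: ltW (pR_gt1 R Hp).
by have [_ _ ->] := key M (leqnn M).
Qed.
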